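(* Let $n$ and $k$ be positive integers, let $\alpha_1,\ldots,\alpha_n$ be positive real numbers, and let $b_1,\ldots,b_n$ be integers. Let $A_1,\ldots,A_n$ be finite subsets of $\mathbb{Z}$ each of cardinality $k$. For $1\leqslant i<j\leqslant n$ let $m_{ij}$ be an integer greater than $2\max\{|x_i-x_j|:\ x_i\in A_i,\ x_j\in A_j\}$. Then the set $$\Big\{\sum_{i=1}^n a_i:\ a_i\in A_i \text{ for all } i,\ a_i\alpha_i\neq a_j\alpha_j\ \text{and}\ a_i+b_i\not\equiv a_j+b_j \pmod{m_{ij}}\ \text{whenever}\ i<j\Big\}$$ has more than $(k-n)n$ elements. *)

(* Defs.v *)
From HB Require Import structures.
From mathcomp Require Import all_boot all_order all_algebra.
From mathcomp Require Import finmap.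
From mathcomp Require Import reals.
Set Implicit Arguments. Unset Strict Implicit. Unset Printing Implicit Defensive.
Import Order.TTheory GRing.Theory Num.Theory.
Local Open Scope ring_scope.
Local Open Scope fset_scope.

Definition restricted_sumset (R : realType) (n : nat) (alpha : 'I_n -> R)
    (b : 'I_n -> int) (A : 'I_n -> {fset int}) (m : 'I_n -> 'I_n -> int)
    (s : int) : Prop :=
  exists a : 'I_n -> int,
    [/\ forall i, a i \in A i,
        forall i j : 'I_n, (i < j)%N ->
          (a i)%:~R * alpha i != (a j)%:~R * alpha j
          /\ (a i + b i != a j + b j %[mod m i j])%Z
      & s = \sum_(i < n) a i].

(* Main.v *)
Require Import Defs.
Set Warnings "-notation-overridden,-ambiguous-paths,-notation-incompatible-prefix".
From HB Require Import structures.
From mathcomp Require Import all_boot all_order all_algebra.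
From mathcomp Require Import finmap.
From mathcomp Require Import reals.
From mathcomp Require Import fingroup perm.
From mathcomp Require Import mpoly.
Set Warnings "-notation-overridden,-ambiguous-paths,-notation-incompatible-prefix".
Import Order.TTheory GRing.Theory Num.Theory.
Local Open Scope ring_scope.
Set Implicit Arguments. Unset Strict Implicit. Unset Printing Implicit Defensive.
From mathcomp Require Import zify ring lra.
Lemma lagrange_sum (R : fieldType) (k : nat) (x : 'I_k -> R) :
  injective x -> forall e, (e < k)%N ->
  \sum_(j < k) x j ^+ e / \prod_(l < k | l != j) (x j - x l) = (e == k.-1)%:R.
Proof.
move=> xinj e ek.
pose d j := \prod_(l < k | l != j) (x j - x l).
have dnz j : d j != 0.
  by apply/prodf_neq0 => l lj; rewrite subr_eq0; apply: contra lj => /eqP/xinj ->.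
pose L j := \prod_(l < k | l != j) ('X - (x l)%:P).
have Lx j i : (L j).[x i] = if i == j then d j else 0.
  rewrite horner_prod; case: eqP => [->|/eqP ij].
    by apply: eq_bigr => l _; rewrite hornerXsubC.
  by rewrite (bigD1 i) //= hornerXsubC subrr mul0r.
have sL j : size (L j) = k.
  rewrite size_prod; last by move=> l _; rewrite -size_poly_eq0 size_XsubC.
  rewrite (eq_bigr (fun _ => 2%N)); last by move=> l _; rewrite size_XsubC.
  rewrite sum_nat_const cardC1 card_ord.
  case: k x xinj ek {d dnz L Lx} j => [|k'] x xinj ek j; first by case: j.
  by rewrite /=; lia.
have lL j : lead_coef (L j) = 1 by apply: lead_coef_prod_XsubC.
pose q := \sum_(j < k) (x j ^+ e / d j) *: L j.
have qx i : q.[x i] = x i ^+ e.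
  rewrite horner_sum (bigD1 i) //= big1 ?addr0.
    by rewrite hornerZ Lx eqxx mulfVK.
  by move=> j ji; rewrite hornerZ Lx eq_sym (negbTE ji) mulr0.
have qe : q = 'X^e.
  apply/eqP; rewrite -subr_eq0; apply/negPn/negP => nz.
  have := max_poly_roots nz (rs := [seq x i | i <- enum 'I_k]).
  rewrite size_map size_enum_ord map_inj_uniq ?enum_uniq //.
  have -> : all (root (q - 'X^e)) [seq x i | i <- enum 'I_k].
    by apply/allP => y /mapP [i _ ->]; rewrite /root hornerD hornerN hornerXn qx subrr.
  move=> /(_ isT isT); apply/negP; rewrite -leqNgt.
  apply: (leq_trans (size_add _ _)); rewrite size_opp size_polyXn geq_max ek andbT.
  apply: (leq_trans (size_sum _ _ _)); apply/bigmax_leqP => j _.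
  by apply: (leq_trans (size_scale_leq _ _)); rewrite sL.
have := congr1 (fun p : {poly R} => p`_k.-1) qe.
rewrite coefXn eq_sym => <-.
rewrite coef_sum; apply: eq_bigr => j _.
rewrite coefZ; have -> : (L j)`_k.-1 = 1 by rewrite -(sL j) -lead_coefE lL.
by rewrite mulr1.
Qed.

Lemma sum_msupp_pick (R : ringType) (n : nat) (p : {mpoly R[n]}) (K : 'X_{1..n}) :
  \sum_(m <- msupp p) p@_m * (m == K)%:R = p@_K.
Proof.
have [Kin|Knin] := boolP (K \in msupp p).
  rewrite (bigD1_seq K) ?msupp_uniq //= eqxx mulr1 big1 ?addr0 //.
  by move=> m /negbTE ->; rewrite mulr0.
rewrite big_seq big1; first by apply/esym/eqP; rewrite mcoeff_eq0.
by move=> m min; case: eqP min Knin => [->->|_ _ _]; rewrite ?mulr0.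
Qed.

Lemma cn_formula (R : fieldType) (n k : nat) (x : 'I_n -> 'I_k -> R)
  (xinj : forall i, injective (x i)) (p : {mpoly R[n]}) :
  (0 < k)%N -> (msize p <= (n * k.-1).+1)%N ->
  \sum_(f : {ffun 'I_n -> 'I_k})
     meval (fun i => x i (f i)) p *
     \prod_(i < n) (\prod_(l < k | l != f i) (x i (f i) - x i l))^-1
  = p@_[multinom k.-1 | i < n].
Proof.
move=> k0 hp.
pose w i j := (\prod_(l < k | l != j) (x i j - x i l))^-1.
pose lam i e := \sum_(j < k) x i j ^+ e * w i j.
have lamE i e : (e < k)%N -> lam i e = (e == k.-1)%:R.
  by move=> ek; rewrite -(@lagrange_sum _ _ _ (xinj i) _ ek).
have prodlam m : (mdeg m <= n * k.-1)%N ->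
    \prod_(i < n) lam i (m i) = (m == [multinom k.-1 | i < n])%:R.
  move=> dm.
  case: (pickP (fun i : 'I_n => m i < k.-1)%N) => [i lti|ge].
    rewrite (bigD1 i) //= lamE; last by apply: (leq_trans lti); rewrite leq_pred.
    rewrite (ltn_eqF lti) mul0r; case: eqP => // mK.
    by move: lti; rewrite mK mnmE ltnn.
  have mK : m = [multinom k.-1 | i < n].
    apply/mnmP => i; rewrite mnmE; apply/eqP; rewrite eqn_leq.
    have := ge i => /negbT; rewrite -leqNgt => ->; rewrite andbT.
    rewrite leqNgt; apply/negP => gti.
    move: dm; apply/negP; rewrite -ltnNge mdegE.
    have -> : (n * k.-1 = \sum_(j < n) k.-1)%N by rewrite sum_nat_const card_ord.
    rewrite (bigD1 i) //= [X in (_ < X)%N](bigD1 i) //=.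
    rewrite -addSn; apply: leq_add => //; apply: leq_sum.
    by move=> j _; have := ge j => /negbT; rewrite -leqNgt.
  rewrite mK eqxx; apply: big1 => i _; rewrite mnmE lamE ?eqxx //.
  by rewrite prednK.
rewrite -[RHS]sum_msupp_pick.
transitivity (\sum_(m <- msupp p) p@_m * \prod_(i < n) lam i (m i)); last first.
  rewrite big_seq_cond [RHS]big_seq_cond; apply: eq_bigr => m /andP [min _].
  rewrite prodlam //; have h := msize_mdeg_lt min.
  by rewrite -ltnS; apply: leq_trans h hp.
rewrite (eq_bigr (fun f : {ffun 'I_n -> 'I_k} => \sum_(m <- msupp p)
    p@_m * \prod_(i < n) (x i (f i) ^+ m i * w i (f i)))); last first.
  move=> f _; rewrite mevalE mulr_suml; apply: eq_bigr => m _.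
  by rewrite -mulrA big_split.
rewrite exchange_big; apply: eq_bigr => m _.
by rewrite -mulr_sumr bigA_distr_bigA.
Qed.

Lemma msizeM_sharp (R : nzRingType) (n : nat) (p q : {mpoly R[n]}) :
  (msize (p * q) <= (msize p + msize q).-1)%N.
Proof.
have [->|nzp] := eqVneq p 0; first by rewrite mul0r msize0.
have [->|nzq] := eqVneq q 0; first by rewrite mulr0 msize0.
have [->|nzpq] := eqVneq (p * q) 0; first by rewrite msize0.
rewrite -(mlead_deg nzp) -(mlead_deg nzq) -(mlead_deg nzpq) addSn /= addnS ltnS.
by rewrite -mdegD; apply: lemc_mdeg; apply: mleadM_le.
Qed.

Definition tq (R : nzRingType) (n d : nat) (p q : {mpoly R[n]}) :=
  [&& (msize p <= d.+1)%N, (msize q <= d.+1)%N & (msize (p - q) <= d)%N].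

Lemma tqM (R : nzRingType) (n d1 d2 : nat) (p p' q q' : {mpoly R[n]}) :
  tq d1 p p' -> tq d2 q q' -> tq (d1 + d2) (p * q) (p' * q').
Proof.
move=> /and3P [h1 h2 h3] /and3P [h4 h5 h6]; apply/and3P; split.
- apply: leq_trans (msizeM_sharp _ _) _; lia.
- apply: leq_trans (msizeM_sharp _ _) _; lia.
have -> : p * q - p' * q' = (p - p') * q + p' * (q - q').
  by rewrite mulrBl mulrBr addrA subrK.
apply: leq_trans (msizeD_le _ _) _; rewrite geq_max.
have := msizeM_sharp (p - p') q; have := msizeM_sharp p' (q - q').
move=> a b; apply/andP; split; [apply: leq_trans b _ | apply: leq_trans a _]; lia.
Qed.

Lemma tq_prod (R : nzRingType) (n : nat) (I : Type) (r : seq I) (P : pred I)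
   (d : I -> nat) (F G : I -> {mpoly R[n]}) :
  (forall i, P i -> tq (d i) (F i) (G i)) ->
  tq (\sum_(i <- r | P i) d i) (\prod_(i <- r | P i) F i) (\prod_(i <- r | P i) G i).
Proof.
move=> h; elim: r => [|i r IH].
  by rewrite !big_nil /tq msize1 subrr msize0.
rewrite !big_cons; case: ifP => Pi //.
exact: tqM (h i Pi) IH.
Qed.

Lemma mcoeffMXU (R : comNzRingType) (n : nat) (p : {mpoly R[n]}) (i : 'I_n) f :
  (p * 'X_i)@_f = if (0 < f i)%N then p@_(f - U_(i))%MM else 0.
Proof.
case: ifP => fi.
  have fE : f = (U_(i) + (f - U_(i)))%MM.
    rewrite addmC submK //; apply/mnm_lepP => j; rewrite mnm1E.
    by case: eqP => [<-|] //.
  by rewrite {1}fE mcoeffMX.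
rewrite mcoeffM big1 // => -[k1 k2] /= /eqP fE.
rewrite mcoeffX; case: eqP => [k2E|]; last by rewrite mulr0.
move/(congr1 (fun m : 'X_{1..n} => m i)): fE.
by rewrite mnmDE -k2E mnm1E eqxx addn1 => h; rewrite h in fi.
Qed.

Lemma coef_sumX_pow (R : numFieldType) (n m : nat) (f : 'X_{1..n}) :
  ((\sum_(i < n) 'X_i) ^+ m : {mpoly R[n]})@_f =
  (mdeg f == m)%:R * ((mdeg f)`!%:R / (\prod_(i < n) (f i)`!)%:R).
Proof.
elim: m f => [|m IH] f.
  rewrite expr0 mcoeff1 mdeg_eq0; case: eqP => [->|_]; last by rewrite mul0r.
  rewrite mdeg0 mul1r big1 ?divr1 // => i _; by rewrite mnm0E.
have pf : (\prod_(i < n) (f i)`!)%:R != 0 :> R.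
  by rewrite pnatr_eq0 -lt0n prodn_gt0 // => i; rewrite fact_gt0.
rewrite exprSr mulr_sumr raddf_sum /=.
rewrite (eq_bigr (fun i => (mdeg f == m.+1)%:R * ((f i)%:R * (m`!%:R /
     (\prod_(i < n) (f i)`!)%:R)))); last first.
  move=> i _; rewrite mcoeffMXU; case: ifP => fi; last first.
    by move: fi; rewrite lt0n => /negbFE/eqP ->; rewrite mul0r mulr0.
  have le : (U_(i) <= f)%MM.
    by apply/mnm_lepP => j; rewrite mnm1E; case: eqP => [<-|].
  have dE : mdeg f = (mdeg (f - U_(i))%MM).+1.
    by rewrite -{1}(submK le) mdegD mdeg1 addn1.
  rewrite IH dE eqSS; case: eqP => [->|]; last by rewrite !mul0r.
  rewrite !mul1r.
  have hP : (\prod_(j < n) (f j)`!)%:R = (f i)%:R *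
      (\prod_(j < n) ((f - U_(i))%MM j)`!)%:R :> R.
    rewrite (bigD1 i) //= [in RHS](bigD1 i) //= mnmBE mnm1E eqxx.
    have fiE : f i = (f i - 1).+1 by lia.
    rewrite {1}fiE factS -fiE !natrM mulrA; congr (_ * _).
    by congr (_ %:R); apply: eq_bigr => j /negbTE ij; rewrite mnmBE mnm1E eq_sym ij subn0.
  have fi0 : (f i)%:R != 0 :> R by rewrite pnatr_eq0 -lt0n.
  have pf' : (\prod_(j < n) ((f - U_(i))%MM j)`!)%:R != 0 :> R.
    by rewrite pnatr_eq0 -lt0n prodn_gt0 // => j; rewrite fact_gt0.
  by rewrite hP; field; rewrite fi0 pf'.
rewrite -mulr_sumr -mulr_suml -natr_sum -mdegE.
case: eqP => [->|]; last by rewrite !mul0r.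
by rewrite !mul1r factS natrM mulrA.
Qed.

Lemma detM_nz (R : numFieldType) (n k : nat) : (n <= k)%N ->
  \det (\matrix_(a < n, b < n)
     (if (a + b <= k.-1)%N then ((k.-1 - a - b)`!%:R)^-1 else 0) : 'M[R]_n) != 0.
Proof.
move=> nk.
set M := \matrix_(a < n, b < n) _.
pose F := \matrix_(a < n, b < n) ((k.-1 - a) ^_ b)%:R : 'M[R]_n.
have DM : diag_mx (\row_(a < n) ((k.-1 - a)`!%:R : R)) *m M = F.
  apply/matrixP => a b; rewrite mul_diag_mx !mxE; case: ifP => h.
    have hb : (b <= k.-1 - a)%N by move: h; lia.
    rewrite -(ffact_fact hb) natrM mulfK // pnatr_eq0 -lt0n fact_gt0 //.
  by rewrite mulr0 ffact_small //; move/negbT: h; rewrite -ltnNge; have := ltn_ord a; lia.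
pose p (b : nat) : {poly R} := \prod_(l < b) ('X - (l%:R)%:P).
have sp b : size (p b) = b.+1.
  by rewrite /p size_prod_XsubC -[X in _ = X.+1]card_ord cardT enumT.
have lp b : lead_coef (p b) = 1 by apply: lead_coef_prod_XsubC.
have pc (x b : nat) : (p b).[x%:R] = (x ^_ b)%:R.
  rewrite horner_prod ffact_prod natr_prod.
  have [bx|xb] := leqP b x.
    apply: eq_bigr => l _; rewrite hornerXsubC natrB //.
    by apply: ltnW; apply: leq_trans (ltn_ord l) bx.
  rewrite (bigD1 (Ordinal xb)) //= hornerXsubC subrr mul0r.
  by rewrite (bigD1 (Ordinal xb)) //= subnn mul0r.
pose W := \matrix_(a < n, t < n) (((k.-1 - a)%:R : R) ^+ t).
pose U := \matrix_(t < n, b < n) (p b)`_t.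
have FWU : F = W *m U.
  apply/matrixP => a b; rewrite !mxE -pc (@horner_coef_wide _ n); last by rewrite sp.
  by apply: eq_bigr => t _; rewrite !mxE mulrC.
have dU : \det U = 1.
  rewrite -det_tr det_trig.
    by apply: big1 => i _; rewrite !mxE -(lp i) lead_coefE sp.
  apply/is_trig_mxP => i j ij; rewrite !mxE nth_default // sp //.
have dW : \det W != 0.
  have -> : W = (Vandermonde n (\row_(a < n) ((k.-1 - a)%:R : R)))^T.
    by apply/matrixP => a t; rewrite !mxE.
  rewrite det_tr det_Vandermonde; apply/prodf_neq0 => i _; apply/prodf_neq0 => j ij.
  rewrite !mxE subr_eq0 eqr_nat; apply/eqP => h.
  have := ltn_ord j; have := ltn_ord i; lia.
have dF : \det F != 0 by rewrite FWU det_mulmx dU mulr1.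
apply: contra dF => /eqP dM0; rewrite -DM det_mulmx dM0 mulr0 //.
Qed.
Lemma vander_expand (R : comNzRingType) (n : nat) (a : 'I_n -> R) :
  \prod_(i < n) \prod_(j < n | (i < j)%N) (a j - a i) =
  \sum_(s : 'S_n) (-1) ^+ s * \prod_(i < n) a i ^+ s i.
Proof.
transitivity (\det (Vandermonde n (\row_(j < n) a j))).
  rewrite det_Vandermonde; apply: eq_bigr => i _; apply: eq_bigr => j _.
  by rewrite !mxE.
rewrite -det_tr /determinant.
apply: eq_bigr => s _; congr (_ * _); apply: eq_bigr => i _; by rewrite !mxE.
Qed.

Definition mperm (n : nat) (s : 'S_n) : 'X_{1..n} := [multinom (s i : nat) | i < n].

Lemma vander_expandX (R : comNzRingType) (n : nat) (c : 'I_n -> R) :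
  \prod_(i < n) \prod_(j < n | (i < j)%N) (c j *: 'X_j - c i *: 'X_i) =
  \sum_(s : 'S_n) ((-1) ^+ s * \prod_(i < n) c i ^+ s i) *:
       ('X_[mperm s] : {mpoly R[n]}).
Proof.
rewrite (vander_expand (fun i => c i *: ('X_i : {mpoly R[n]}))).
apply: eq_bigr => s _.
rewrite (eq_bigr (fun i => c i ^+ s i *: ('X_i : {mpoly R[n]}) ^+ s i)); last first.
  by move=> i _; rewrite exprZn.
rewrite scaler_prod mpolyXE_id.
have -> : \prod_(i < n) ('X_i : {mpoly R[n]}) ^+ mperm s i = \prod_(i < n) 'X_i ^+ s i.
  by apply: eq_bigr => i _; rewrite /mperm mnmE.
rewrite -scalerA; case: (odd_perm s); rewrite ?expr1 ?expr0 ?mulN1r ?mul1r ?scaleN1r ?scale1r //.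
Qed.

Lemma mcoeffMXm (R : comNzRingType) (n : nat) (p : {mpoly R[n]}) u f :
  (p * 'X_[u])@_f = if (u <= f)%MM then p@_(f - u)%MM else 0.
Proof.
case: ifP => fi.
  have fE : f = (u + (f - u))%MM by rewrite addmC submK.
  by rewrite {1}fE mcoeffMX.
rewrite mcoeffM big1 // => -[k1 k2] /= /eqP fE.
rewrite mcoeffX; case: eqP => [k2E|]; last by rewrite mulr0.
have le : (u <= f)%MM.
  apply/mnm_lepP => i; have := congr1 (fun m : 'X_{1..n} => m i) fE.
  by rewrite /= mnmDE -k2E => ->; apply: leq_addl.
by rewrite le in fi.
Qed.

Lemma sum_ord_double n : ((\sum_(i < n) (i : nat)) * 2 = n * n.-1)%N.
Proof.
elim: n => [|n IH]; first by rewrite big_ord0.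
rewrite big_ord_recr /= mulnDl IH; case: n {IH} => //= n; nia.
Qed.

Lemma arith1 n k T x : (n <= k)%N -> (n * k.-1 = x + (T + T))%N ->
  (T * 2 = n * n.-1)%N -> x = (n * (k - n))%N.
Proof.
case: n => [|n] nk; first by rewrite !mul0n; lia.
case: k nk => [|k] nk //= h1 h2.
have e : (n.+1 * k = n.+1 * (k.+1 - n.+1) + n.+1 * n)%N.
  by rewrite -mulnDr; congr (_ * _)%N; lia.
lia.
Qed.



Definition cfun (bi bj m : int) : int :=
  let r := ((bj - bi) %% m)%Z in if 2 * r < m then r else r - m.

Lemma mod_lemma (x y bi bj m : int) : 0 < m -> 2 * `|x - y| < m ->
  x - y != cfun bi bj m -> (x + bi != y + bj %[mod m])%Z.
Proof.
move=> m0 hxy; apply: contra => /eqP h.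
have : (m %| (x + bi) - (y + bj))%Z by rewrite -eqz_mod_dvd; apply/eqP.
case/dvdzP => q hq.
have e2 := divz_eq (bj - bi) m.
have r0 : 0 <= ((bj - bi) %% m)%Z by rewrite modz_ge0 // gt_eqF.
have r1 : ((bj - bi) %% m)%Z < m by rewrite ltz_pmod.
rewrite /cfun; set r := ((bj - bi) %% m)%Z in e2 r0 r1 *.
set q2 := ((bj - bi) %/ m)%Z in e2.
have ex : x - y = (q + q2) * m + r.
  rewrite mulrDl -addrA -e2; move: hq; lia.
set Q := q + q2 in ex.
have habs : - m < 2 * (x - y) < m.
  case: (ltrP 0 (x - y)) hxy => [pos|neg].
    by rewrite gtr0_norm // => hxy; lia.
  by rewrite ler0_norm // => hxy; lia.
have hQ : Q = 0 \/ (1 <= Q) \/ Q = -1 \/ (Q <= -2) by lia.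
case: hQ => [Q0|[Q1|[Q1|Q1]]].
- rewrite Q0 mul0r add0r in ex; rewrite ex.
  by case: ltrP => h2; [rewrite eqxx | exfalso; lia].
- have : m <= Q * m by rewrite -{1}(mul1r m) ler_pM2r.
  by move=> h3; exfalso; lia.
- rewrite Q1 mulN1r in ex; rewrite ex.
  case: ltrP => h2; [exfalso; lia | apply/eqP; lia].
- have : Q * m <= -2 * m by rewrite ler_pM2r.
  by move=> h3; exfalso; lia.
Qed.

Lemma top_coef_nz (R : realFieldType) (n k : nat) (alpha : 'I_n -> R) :
  (forall i, 0 < alpha i) -> (n <= k)%N ->
  ((\prod_(i < n) \prod_(j < n | (i < j)%N) (alpha j *: 'X_j - alpha i *: 'X_i)) *
   (\prod_(i < n) \prod_(j < n | (i < j)%N) ('X_j - 'X_i)) *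
   (\sum_(i < n) 'X_i) ^+ (n * (k - n)) : {mpoly R[n]})@_[multinom k.-1 | i < n] != 0.
Proof.
move=> apos nk.
set K := [multinom k.-1 | i < n]; set mm := (n * (k - n))%N.
set S := (\sum_(i < n) 'X_i : {mpoly R[n]}).
pose G (a b : nat) : R := if (a + b <= k.-1)%N then ((k.-1 - a - b)`!%:R)^-1 else 0.
pose M := \matrix_(a < n, b < n) G a b : 'M[R]_n.
have Vx : \prod_(i < n) \prod_(j < n | (i < j)%N) ('X_j - 'X_i) =
    \sum_(s : 'S_n) (-1) ^+ s *: ('X_[mperm s] : {mpoly R[n]}).
  transitivity (\sum_(s : 'S_n) ((-1) ^+ s * \prod_(i < n) (1 : R) ^+ s i) *:
             ('X_[mperm s] : {mpoly R[n]})); last first.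
    by apply: eq_bigr => s _; rewrite big1 ?mulr1 // => i _; rewrite expr1n.
  rewrite -vander_expandX; apply: eq_bigr => i _; apply: eq_bigr => j _.
  by rewrite !scale1r.
rewrite vander_expandX Vx.
have E : (\sum_(t : 'S_n) ((-1) ^+ t * \prod_(i < n) alpha i ^+ t i) *: 'X_[mperm t]) *
         (\sum_(s : 'S_n) (-1) ^+ s *: 'X_[mperm s]) * S ^+ mm =
    \sum_(t : 'S_n) \sum_(s : 'S_n) (((-1) ^+ t * \prod_(i < n) alpha i ^+ t i) * (-1) ^+ s)
       *: (S ^+ mm * 'X_[(mperm t + mperm s)%MM]).
  rewrite mulr_suml mulr_suml; apply: eq_bigr => t _.
  rewrite mulr_sumr mulr_suml; apply: eq_bigr => s _.
  rewrite mpolyXD -scalerAl -scalerAr scalerA -scalerAl.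
  by congr (_ *: _); rewrite mulrC.
rewrite E raddf_sum /=.
have sumperm (t : 'S_n) : (\sum_(i < n) (t i : nat) = \sum_(i < n) (i : nat))%N.
  by rewrite [RHS](reindex_inj (@perm_inj _ t)).
have mdK : mdeg K = (n * k.-1)%N.
  by rewrite mdegE (eq_bigr (fun _ => k.-1)) ?sum_nat_const ?card_ord // => i _; rewrite mnmE.
have T (t s : 'S_n) : (if (mperm t + mperm s <= K)%MM then
      (S ^+ mm)@_(K - (mperm t + mperm s))%MM else 0) =
      mm`!%:R * \prod_(i < n) G (t i) (s i).
  set u := (mperm t + mperm s)%MM.
  have uE i : u i = (t i + s i)%N by rewrite mnmDE /mperm !mnmE.
  case: ifP => le.
    have mdu : mdeg (K - u)%MM = mm.
      have h1 : mdeg K = (mdeg (K - u)%MM + mdeg u)%N by rewrite -mdegD submK.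
      have h2 : mdeg u = (\sum_(i < n) (i : nat) + \sum_(i < n) (i : nat))%N.
        by rewrite mdegE (eq_bigr _ (fun i _ => uE i)) big_split /= !sumperm.
      have h3 := sum_ord_double n.
      rewrite mdK h2 in h1; exact: arith1 nk h1 h3.
    rewrite coef_sumX_pow mdu eqxx mul1r; congr (_ * _).
    rewrite natr_prod -prodfV; apply: eq_bigr => i _.
    have := mnm_lepP le i; rewrite uE mnmE /G => ->.
    by rewrite mnmBE uE mnmE subnDA.
  case: (pickP (fun i => ~~ (u i <= K i)%N)) => [i hi|none]; last first.
    by move: le; have -> // : (u <= K)%MM; apply/mnm_lepP => i; have := none i => /negbFE.
  rewrite (bigD1 i) //= /G; move: hi; rewrite uE mnmE => /negbTE ->.
  by rewrite mul0r mulr0.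
have inner (t : 'S_n) :
    (\sum_(s : 'S_n) (((-1) ^+ t * \prod_(i < n) alpha i ^+ t i) * (-1) ^+ s) *:
       (S ^+ mm * 'X_[(mperm t + mperm s)%MM]))@_K =
    mm`!%:R * (((-1) ^+ t * \prod_(i < n) alpha i ^+ t i) *
      \det (\matrix_(a < n, b < n) G (t a) b : 'M[R]_n)).
  rewrite raddf_sum /=.
  under eq_bigr do rewrite mcoeffZ mcoeffMXm T.
  rewrite /determinant !mulr_sumr; apply: eq_bigr => s _.
  have -> : \prod_(i < n) (\matrix_(a < n, b < n) G (t a) b : 'M[R]_n) i (s i) =
     \prod_(i < n) G (t i) (s i) by apply: eq_bigr => i _; rewrite mxE.
  have rf (a1 b1 c1 d1 : R) : (a1 * b1) * (c1 * d1) = c1 * (a1 * (b1 * d1)) by ring.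
  exact: rf.
rewrite (eq_bigr _ (fun t _ => inner t)).
have dperm (t : 'S_n) : \det (\matrix_(a < n, b < n) G (t a) b : 'M[R]_n) = (-1) ^+ t * \det M.
  have -> : (\matrix_(a < n, b < n) G (t a) b : 'M[R]_n) = row_perm t M.
    by apply/matrixP => a b; rewrite !mxE.
  by rewrite row_permE det_mulmx det_perm.
under eq_bigr do rewrite dperm mulrACA -expr2 sqrr_sign mul1r.
rewrite -mulr_sumr -mulr_suml.
have pos : 0 < \sum_(t : 'S_n) \prod_(i < n) alpha i ^+ t i.
  rewrite (bigD1 1%g) //=.
  have hx : 0 < \prod_(i < n) alpha i ^+ (1%g : 'S_n) i.
    by apply: prodr_gt0 => i _; apply: exprn_gt0.
  have hy : 0 <= \sum_(t : 'S_n | t != 1%g) \prod_(i < n) alpha i ^+ t i.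
    apply: sumr_ge0 => t _; apply: prodr_ge0 => i _; apply: exprn_ge0.
    exact: ltW.
  exact: ltr_wpDr hy hx.
apply: mulf_neq0; first by rewrite pnatr_eq0 -lt0n fact_gt0.
apply: mulf_neq0; first exact: lt0r_neq0.
exact: detM_nz.
Qed.


Lemma msizeXU (R : nzRingType) n (i : 'I_n) : msize ('X_i : {mpoly R[n]}) = 2%N.
Proof. by rewrite msizeX mdeg1. Qed.

Lemma tq_lin (R : comNzRingType) n (a b : R) (i j : 'I_n) :
  tq 1 (a *: 'X_j - b *: 'X_i : {mpoly R[n]}) (a *: 'X_j - b *: 'X_i).
Proof.
have h : (msize (a *: 'X_j - b *: 'X_i : {mpoly R[n]}) <= 2)%N.
  apply: leq_trans (msizeD_le _ _) _; rewrite geq_max msizeN.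
  by rewrite !(leq_trans (msizeZ_le _ _)) // msizeXU.
by rewrite /tq h subrr msize0.
Qed.

Lemma tq_shift (R : comNzRingType) n (c : R) (i j : 'I_n) :
  tq 1 ('X_j - 'X_i + c%:MP : {mpoly R[n]}) ('X_j - 'X_i).
Proof.
have h : (msize ('X_j - 'X_i : {mpoly R[n]}) <= 2)%N.
  by apply: leq_trans (msizeD_le _ _) _; rewrite geq_max msizeN !msizeXU.
apply/and3P; split => //.
  apply: leq_trans (msizeD_le _ _) _; rewrite geq_max h msizeC.
  by case: (c != 0).
by rewrite addrC addKr msizeC; case: (c != 0).
Qed.

Lemma tq_sum (R : comNzRingType) n (c : R) :
  tq 1 (\sum_(i < n) 'X_i - c%:MP : {mpoly R[n]}) (\sum_(i < n) 'X_i).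
Proof.
have h : (msize (\sum_(i < n) 'X_i : {mpoly R[n]}) <= 2)%N.
  apply: leq_trans (msize_sum _ _ _) _; apply/bigmax_leqP => i _.
  by rewrite msizeXU.
apply/and3P; split => //.
  apply: leq_trans (msizeD_le _ _) _; rewrite geq_max h msizeN msizeC.
  by case: (c != 0).
by rewrite addrC addKr msizeN msizeC; case: (c != 0).
Qed.

Lemma pairs_double n :
  ((\sum_(i < n) \sum_(j < n | (i < j)%N) 1) * 2 = n * n.-1)%N.
Proof.
have ex : (\sum_(i < n) \sum_(j < n | (j < i)%N) 1 =
           \sum_(i < n) \sum_(j < n | (i < j)%N) 1)%N.
  rewrite [RHS](exchange_big_dep xpredT) //=.
have : (\sum_(i < n) (\sum_(j < n | (i < j)%N) 1 + \sum_(j < n | (j < i)%N) 1) =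
        \sum_(i < n) n.-1)%N.
  apply: eq_bigr => i _.
  have -> : n.-1 = #|predC1 i| by rewrite cardC1 card_ord.
  rewrite -sum1_card [RHS](bigID (fun j : 'I_n => (i < j)%N)) /=.
  congr (_ + _)%N; apply: eq_bigl => j; rewrite !inE.
    by rewrite -(inj_eq val_inj) /= eq_sym; case: ltngtP.
  by rewrite -(inj_eq val_inj) /= eq_sym; case: ltngtP.
rewrite big_split /= ex sum_nat_const card_ord => h; by rewrite -h muln2 addnn.
Qed.

Lemma prod_const_seq (R : ringType) (I : Type) (s : seq I) (c : R) :
  \prod_(t <- s) c = c ^+ size s.
Proof. by elim: s => [|t s IH]; rewrite ?big_nil ?expr0 // big_cons IH exprS. Qed.

Lemma arith2 n k P mm : (n <= k)%N -> (P * 2 = n * n.-1)%N -> mm = (n * (k - n))%N ->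
  (P * 2 + mm = n * k.-1)%N.
Proof.
move=> nk hP ->; rewrite hP.
case: n nk {hP} => [|n] nk; first by rewrite !mul0n.
case: k nk => [|k] nk //=.
rewrite -mulnDr; congr (_ * _)%N; lia.
Qed.


Lemma subr_add0 (R : ringType) (a b : R) : b - a + (a - b) = 0.
Proof. by rewrite addrC addrA subrK subrr. Qed.

Unset Implicit Arguments.
Local Open Scope fset_scope.

Theorem theorem1p3 (R : realType) (n k : nat) (hn : (0 < n)%N) (hk : (0 < k)%N)
    (alpha : 'I_n -> R) (halpha : forall i, 0 < alpha i)
    (b : 'I_n -> int) (A : 'I_n -> {fset int})
    (hA : forall i, #|` A i| = k)
    (m : 'I_n -> 'I_n -> int)
    (hm : forall i j : 'I_n, (i < j)%N ->
       forall x y, x \in A i -> y \in A j -> 2 * `|x - y| < m i j) :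
  exists s : seq int,
    [/\ uniq s, forall x, x \in s -> restricted_sumset alpha b A m x
      & (k%:Z - n%:Z) * n%:Z < (size s)%:Z].
Proof.
Local Close Scope fset_scope.
have [kn|nk] := ltnP k n.
  by exists [::]; split => //=; nia.
pose x (i : 'I_n) (j : 'I_k) : int := nth 0%R (enum_fset (A i)) j.
have xA i j : x i j \in A i by rewrite /x mem_nth // hA.
have xinj i : injective (x i).
  move=> j1 j2 /eqP; rewrite /x nth_uniq ?hA // ?fset_uniq // => /eqP.
  exact: val_inj.
pose xr (i : 'I_n) (j : 'I_k) : R := (x i j)%:~R.
have xrinj i : injective (xr i) by move=> j1 j2 /intr_inj /xinj.
pose c (i j : 'I_n) : int := cfun (b i) (b j) (m i j).
pose P : {mpoly R[n]} := \prod_(i < n) \prod_(j < n | (i < j)%N)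
   ((alpha j *: 'X_j - alpha i *: 'X_i) * ('X_j - 'X_i + ((c i j)%:~R : R)%:MP)).
pose v (f : {ffun 'I_n -> 'I_k}) (i : 'I_n) : R := xr i (f i).
have Pfac f : meval (v f) P != 0 -> forall i j : 'I_n, (i < j)%N ->
    (alpha j * xr j (f j) - alpha i * xr i (f i) != 0) /\
    (xr j (f j) - xr i (f i) + (c i j)%:~R != 0).
  move=> hP i j ij; move: hP; rewrite /P rmorph_prod => /prodf_neq0 /(_ i isT).
  rewrite rmorph_prod => /prodf_neq0 /(_ j ij).
  rewrite rmorphM /= !rmorphB /= rmorphD /= rmorphB /= !mevalZ !mevalXU mevalC.
  by rewrite mulf_eq0 negb_or => /andP [-> ->].
pose T := undup (map (fun f : {ffun 'I_n -> 'I_k} => (\sum_(i < n) x i (f i))%R)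
   (filter (fun f : {ffun 'I_n -> 'I_k} => meval (v f) P != 0) (enum {ffun 'I_n -> 'I_k}))).
exists T; split.
- exact: undup_uniq.
- move=> s0; rewrite mem_undup => /mapP [f]; rewrite mem_filter => /andP [hP _] ->.
  exists (fun i => x i (f i)); split => //.
  move=> i j ij; have [h1 h2] := Pfac f hP i j ij; split.
    by move: h1; rewrite subr_eq0 eq_sym mulrC [_ * alpha j]mulrC.
  have hmij := hm i j ij _ _ (xA i (f i)) (xA j (f j)).
  apply: mod_lemma => //.
    by apply: le_lt_trans hmij; rewrite mulr_ge0.
  apply: contra h2 => /eqP e; rewrite /xr /c -e intrB subr_add0 //.
have : (n * (k - n) < size T)%N; last by move=> h; rewrite subzn // -PoszM ltz_nat mulnC.
rewrite ltnNge; apply/negP => hle.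
set mm := (n * (k - n))%N in hle.
pose S := T ++ nseq (mm - size T) 0%R.
have sS : size S = mm by rewrite size_cat size_nseq; lia.
pose Q := P * \prod_(t <- S) (\sum_(i < n) 'X_i - ((t%:~R : R))%:MP).
have Qv f : meval (v f) Q = 0.
  rewrite rmorphM /=; have [->|hP] := eqVneq (meval (v f) P) 0; first by rewrite mul0r.
  have tin : (\sum_(i < n) x i (f i))%R \in S.
    rewrite mem_cat mem_undup; apply/orP; left; apply/mapP; exists f => //.
    by rewrite mem_filter hP mem_enum.
  rewrite (big_rem _ tin) /= !rmorphM /= rmorphB /= rmorph_sum /= mevalC.
  rewrite (eq_bigr (fun i => v f i)); last by move=> i _; rewrite mevalXU.
  by rewrite /v /xr -rmorph_sum /= subrr mul0r mulr0.
pose Va := \prod_(i < n) \prod_(j < n | (i < j)%N) (alpha j *: 'X_j - alpha i *: 'X_i).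
pose Vx := \prod_(i < n) \prod_(j < n | (i < j)%N) ('X_j - 'X_i : {mpoly R[n]}).
have tqQ : tq (n * k.-1) Q (Va * Vx * (\sum_(i < n) 'X_i) ^+ mm).
  have h1 := @tq_prod _ n _ (index_enum 'I_n) xpredT
     (fun i => \sum_(j < n | (i < j)%N) (1 + 1))%N
     (fun i => \prod_(j < n | (i < j)%N)
        ((alpha j *: 'X_j - alpha i *: 'X_i) * ('X_j - 'X_i + ((c i j)%:~R : R)%:MP)))
     (fun i => \prod_(j < n | (i < j)%N)
        ((alpha j *: 'X_j - alpha i *: 'X_i) * ('X_j - 'X_i))).
  have h2 := @tq_prod _ n _ S xpredT (fun _ => 1%N)
     (fun t => \sum_(i < n) 'X_i - ((t%:~R : R))%:MP) (fun _ => \sum_(i < n) 'X_i).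
  have h3 := tqM (h1 _) (h2 _).
  have e1 : (\sum_(i <- index_enum 'I_n | xpredT i)
      \sum_(j < n | (i < j)%N) (1 + 1) + \sum_(i <- S | xpredT i) 1 = n * k.-1)%N.
    rewrite sum1_size sS.
    have -> : (\sum_(i <- index_enum 'I_n | xpredT i) \sum_(j < n | (i < j)%N) (1 + 1) =
              (\sum_(i < n) \sum_(j < n | (i < j)%N) 1) * 2)%N.
      rewrite big_distrl /=; apply: eq_bigr => i _; rewrite big_distrl /=.
      by apply: eq_bigr.
    exact: arith2 nk (pairs_double n) erefl.
  rewrite -e1 /Q.
  have -> : Va * Vx = \prod_(i < n) \prod_(j < n | (i < j)%N)
        ((alpha j *: 'X_j - alpha i *: 'X_i) * ('X_j - 'X_i)).
    rewrite /Va /Vx -big_split /=; apply: eq_bigr => i _; by rewrite -big_split.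
  rewrite -sS -prod_const_seq; apply: h3.
  - move=> i _; apply: tq_prod => j _; exact: tqM (tq_lin _ _ _ _) (tq_shift _ _ _).
  - by move=> t _; exact: tq_sum.
have cnf := @cn_formula R n k xr xrinj Q hk.
move/and3P: tqQ => [sQ _ sD].
have := cnf sQ.
rewrite big1; last by move=> f _; rewrite Qv mul0r.
move/esym/eqP; apply/negP.
have -> : Q@_[multinom k.-1 | i < n] =
          (Va * Vx * (\sum_(i < n) 'X_i) ^+ mm)@_[multinom k.-1 | i < n].
  apply/eqP; rewrite -subr_eq0 -mcoeffB; apply/eqP/eqP; rewrite mcoeff_eq0.
  apply: msize_mdeg_ge; apply: leq_trans sD _.
  by rewrite mdegE (eq_bigr (fun _ => k.-1)) ?sum_nat_const ?card_ord // => i _; rewrite mnmE.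
exact: top_coef_nz.
Qed.
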